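(* Let $\mathbf{f} = (f_n)_{n\ge 1}$ be the ordinary paperfolding word over $\{0,1\}$, and let $\rho(n)$ denote its abelian complexity function (with $\rho(0)=1$). Then the sequence $(\rho(n))_{n\ge 0}$ is $2$-regular.
   Context: The ordinary paperfolding word $\mathbf{f}=(f_n)_{n\ge1}$ over $\{0,1\}$ is defined as follows: for $n\ge 1$ write $n=n'2^k$ with $n'$ odd; then $f_n=0$ if $n'\equiv 1 \pmod 4$ and $f_n=1$ if $n'\equiv 3\pmod 4$. Thus $\mathbf{f}=0010011000110110\cdots$. A factor of $\mathbf{f}$ is a finite contiguous block $f_i f_{i+1}\cdots f_{i+n-1}$. Two words $u,v$ over $\{0,1\}$ are abelian equivalent if one is a rearrangement of the other (equivalently, they have the same length and the same number of $0$'s). The abelian complexity $\rho(n)$ is the number of abelian equivalence classes among the factors of $\mathbf{f}$ of length $n$ (so $\rho(0)=1$). For an integer $k\ge2$ and an integer sequence $\mathbf{w}=(w(n))_{n\ge0}$, the $k$-kernel of $\mathbf{w}$ is the set of sequences $\{(w(k^e n+c))_{n\ge0} : e\ge0,\ 0\le c<k^e\}$; $\mathbf{w}$ is $k$-regular if the $\mathbb{Z}$-module generated by its $k$-kernel (together with the constant sequence $(1)_{n\ge0}$) is finitely generated. *)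

(* Defs.v *)
From HB Require Import structures.
From mathcomp Require Import all_boot all_order all_algebra.
From mathcomp Require Import boolp.
Set Implicit Arguments. Unset Strict Implicit. Unset Printing Implicit Defensive.
Import Order.TTheory GRing.Theory Num.Theory.

(* Ordinary paperfolding word, as a bool sequence: true = letter 1, false = 0.
   For n >= 1, n = n' 2^k with n' odd (k = logn 2 n); f_n = 1 iff n' = 3 mod 4.
   The value at n = 0 is irrelevant (the word is indexed from 1). *)
Definition pf (n : nat) : bool := ((n %/ 2 ^ logn 2 n) %% 4 == 3)%N.

Definition pf_factor (i n : nat) : seq bool := [seq pf (i + j) | j <- iota 0 n].

(* Abelian class of a binary word of fixed length = its number of 0's. *)
Definition nzeros (w : seq bool) : nat := count_mem false w.

(* Classes are represented by their
   number of zeros, an element of {0,...,n}. rho 0 = 1 automatically. *)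
Definition rho (n : nat) : nat :=
  #|[set k : 'I_n.+1 | `[< exists i : nat, (0 < i)%N /\ nzeros (pf_factor i n) = k >]]|.

Definition in_kernel (k : nat) (w : nat -> int) (h : nat -> int) : Prop :=
  exists e c : nat, (c < k ^ e)%N /\ h = (fun n => w (k ^ e * n + c)%N).

Definition zspan (S : (nat -> int) -> Prop) (h : nat -> int) : Prop :=
  exists (r : nat) (g : 'I_r -> nat -> int) (c : 'I_r -> int),
    (forall i, S (g i)) /\ forall n, h n = (\sum_(i < r) c i * g i n)%R.

Definition zfin_gen (M : (nat -> int) -> Prop) : Prop :=
  exists (r : nat) (g : 'I_r -> nat -> int),
    (forall i, M (g i)) /\
    forall h, M h -> exists c : 'I_r -> int, forall n, h n = (\sum_(i < r) c i * g i n)%R.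

Definition k_regular (k : nat) (w : nat -> int) : Prop :=
  zfin_gen (zspan (fun h => in_kernel k w h \/ h = (fun _ => 1%R))).

(* Main.v *)
Require Import Defs.
From mathcomp Require Import all_boot all_order all_algebra.
From HB Require Import structures.
From mathcomp Require Import boolp.
From mathcomp Require Import zify ring lra.
Set Implicit Arguments. Unset Strict Implicit. Unset Printing Implicit Defensive.
Import Order.TTheory GRing.Theory Num.Theory.

Lemma logn2_odd n : odd n -> logn 2 n = 0.
Proof. move=> Hn; apply: logn_coprime; by rewrite coprime2n Hn. Qed.

Lemma pf_odd n : odd n -> pf n = (n %% 4 == 3).
Proof. move=> Hn; by rewrite /pf logn2_odd // expn0 divn1. Qed.

Lemma pf_double n : 0 < n -> pf (2 * n) = pf n.
Proof.
move=> Hn; rewrite /pf lognM // (logn_prime 2 (isT : prime 2)) eqxx add1n.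
by rewrite expnS divnMl.
Qed.

Lemma pf_4k1 m : pf (4 * m + 1) = false.
Proof. rewrite pf_odd; last by rewrite oddD oddM. apply/eqP; lia. Qed.
Lemma pf_4k3 m : pf (4 * m + 3) = true.
Proof. rewrite pf_odd; last by rewrite oddD oddM. apply/eqP; lia. Qed.

Local Open Scope ring_scope.

Definition eps (k : nat) : int := if pf k then -1 else 1.
Definition D (n : nat) : int := \sum_(i < n) eps i.+1.
Definition W (n j : nat) : int := D (j + n) - D j.
Definition b2z (b : bool) : int := (b : nat)%:Z.

Lemma DS n : D n.+1 = D n + eps n.+1.
Proof. by rewrite /D big_ord_recr. Qed.

Lemma D0 : D 0 = 0. Proof. by rewrite /D big_ord0. Qed.

Lemma eps_odd m : eps (2 * m + 1)%N = b2z (~~ odd m) - b2z (odd m).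
Proof.
rewrite /eps; have [o|e] := boolP (odd m).
  have -> : (2 * m + 1 = 4 * m./2 + 3)%N.
    by rewrite -[in LHS](odd_double_half m) o; lia.
  by rewrite pf_4k3.
have -> : (2 * m + 1 = 4 * m./2 + 1)%N.
  by rewrite -[in LHS](odd_double_half m) (negbTE e); lia.
by rewrite pf_4k1.
Qed.

Lemma eps_double m : (0 < m)%N -> eps (2 * m) = eps m.
Proof. by move=> Hm; rewrite /eps pf_double. Qed.

Lemma Drec m : D (2 * m) = D m + b2z (odd m) /\ D (2 * m + 1)%N = D m + b2z (~~ odd m).
Proof.
elim: m => [|m [IH1 IH2]]; first by rewrite !D0 /= DS D0 /eps /pf.
have E1 : D (2 * m.+1) = D m.+1 + b2z (odd m.+1).
  have -> : (2 * m.+1 = (2 * m + 1).+1)%N by lia.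
  rewrite DS IH2 DS.
  have -> : ((2 * m + 1).+1 = 2 * m.+1)%N by lia.
  rewrite eps_double // /=; rewrite /b2z; case: (odd m) => /=; ring.
split=> //.
rewrite addn1 DS E1.
have -> : ((2 * m.+1).+1 = 2 * m.+1 + 1)%N by lia.
rewrite eps_odd /b2z /=; case: (odd m) => /=; ring.
Qed.

Definition dl (b c p q : bool) : int :=
  if c then b2z (~~ (q (+) p)) - b2z (~~ q)
  else if b then b2z (~~ (q (+) p)) - b2z q else b2z (q (+) p) - b2z q.

Lemma Drec0 m : D (2 * m) = D m + b2z (odd m). Proof. by case: (Drec m). Qed.
Lemma Drec1 m : D (2 * m + 1)%N = D m + b2z (~~ odd m). Proof. by case: (Drec m). Qed.

Lemma Wrec n j (b c : bool) :
  W (2 * n + b) (2 * j + c) = W (n + (b && c)) j + dl b c (odd n) (odd j).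
Proof.
rewrite /W /dl; case: b; case: c => /=.
- have -> : (2 * j + 1 + (2 * n + 1) = 2 * (j + (n + 1)))%N by lia.
  rewrite Drec0 Drec1 addn1 addnS /= oddD.
  case: (odd j); case: (odd n); rewrite /b2z /=; ring.
- have -> : (2 * j + 0 + (2 * n + 1) = 2 * (j + (n + 0)) + 1)%N by lia.
  rewrite addn0 Drec1 addn0 Drec0 oddD.
  case: (odd j); case: (odd n); rewrite /b2z /=; ring.
- have -> : (2 * j + 1 + (2 * n + 0) = 2 * (j + (n + 0)) + 1)%N by lia.
  rewrite addn0 Drec1 Drec1 oddD.
  case: (odd j); case: (odd n); rewrite /b2z /=; ring.
- have -> : (2 * j + 0 + (2 * n + 0) = 2 * (j + (n + 0)))%N by lia.
  rewrite !addn0 Drec0 Drec0 oddD.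
  case: (odd j); case: (odd n); rewrite /b2z /=; ring.
Qed.

Lemma pf_sym k i : (0 < i)%N -> (i < 2 ^ k)%N -> pf (2 ^ k.+1 - i) = ~~ pf i.
Proof.
elim: k i => [|k IH] i Hi Hik; first by rewrite expn0 in Hik; lia.
have [o|e] := boolP (odd i).
  have Hi2 : (i %% 2 = 1)%N by rewrite modn2 o.
  have HK : (2 ^ k.+2 = 4 * 2 ^ k)%N by rewrite !expnS; lia.
  have HK1 : (2 ^ k.+1 = 2 * 2 ^ k)%N by rewrite !expnS; lia.
  rewrite HK1 in Hik; rewrite HK.
  have Ho : odd (4 * 2 ^ k - i).
    have : ((4 * 2 ^ k - i) %% 2 = 1)%N by move: (2 ^ k)%N Hik => P; lia.
    by rewrite modn2; case: odd.
  rewrite pf_odd // pf_odd //.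
  move: (2 ^ k)%N Hik => P Hik.
  have : (i %% 4 == 1)%N || (i %% 4 == 3)%N by apply/orP; lia.
  case/orP => /eqP H; rewrite H /=; apply/eqP; lia.
have Hi2 : i = (2 * i./2)%N by rewrite -[in LHS](odd_double_half i) (negbTE e); lia.
have H1 : (0 < i./2)%N by lia.
have H2 : (i./2 < 2 ^ k)%N by move: Hik; rewrite expnS; lia.
have -> : (2 ^ k.+2 - i = 2 * (2 ^ k.+1 - i./2))%N.
  by move: Hik; rewrite (expnS 2 k.+1) expnS; lia.
rewrite pf_double; last by move: H2; rewrite expnS; lia.
rewrite IH //; congr (~~ _).
by rewrite [in RHS]Hi2 pf_double.
Qed.

Lemma eps_sym k i : (0 < i)%N -> (i < 2 ^ k)%N -> eps (2 ^ k.+1 - i) = - eps i.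
Proof. by move=> H1 H2; rewrite /eps pf_sym //; case: (pf i). Qed.

Lemma W0 j : W 0 j = 0. Proof. by rewrite /W addn0 subrr. Qed.
Lemma WS n j : W n.+1 j = W n j + eps (j + n).+1.
Proof. by rewrite /W addnS DS; ring. Qed.

Lemma W_refl k n j : (j + n < 2 ^ k)%N ->
  W n (2 ^ k.+1 - 1 - (j + n)) = - W n j.
Proof.
elim: n => [|n IH] H; first by rewrite !W0 oppr0.
have HK : (2 ^ k.+1 = 2 * 2 ^ k)%N by rewrite expnS.
have IH' := IH ltac:(lia).
set x := (2 ^ k.+1 - 1 - (j + n.+1))%N.
have Ex : (2 ^ k.+1 - 1 - (j + n) = x.+1)%N by rewrite /x; lia.
rewrite Ex in IH'.
have E2 : (x.+1 + n = x + n.+1)%N by lia.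
have Hs : eps x.+1 = - eps (j + n).+1.
  have -> : (x.+1 = 2 ^ k.+1 - (j + n).+1)%N by rewrite /x; lia.
  by rewrite eps_sym //; lia.
have A1 : W n.+1 x = W n x.+1 + eps x.+1 by rewrite /W E2 DS; ring.
rewrite A1 IH' Hs (WS n j); ring.
Qed.

Lemma W_sym n j : exists j', W n j' = - W n j.
Proof. exists (2 ^ (j + n).+1 - 1 - (j + n))%N; apply: W_refl; exact: ltn_expl. Qed.


Definition T := (int * int * int * int)%type.

Definition step (b p : bool) (v : T) : T :=
  let a := v.1.1.1 in let bb := v.1.1.2 in let a' := v.1.2 in let b' := v.2 in
  let A2 := if p then Order.max (a + 1) (bb - 1) else Order.max a bb in
  let B2 := if p then Order.max (a - 1) (bb + 1) else Order.max a bb in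
  let A3 := if p then Order.max a bb else Order.max (a + 1) (bb - 1) in
  let B3 := if p then Order.max (a' - 1) (b' + 1) else Order.max a' b' in
  let A4 := if p then Order.max a' b' else Order.max (a' + 1) (b' - 1) in
  let B4 := if p then Order.max a' b' else Order.max (a' - 1) (b' + 1) in
  if b then (A3, B3, A4, B4) else (A2, B2, A3, B3).

Definition v0 : T := (0, 0, 1, 1).

Fixpoint Vf (k n : nat) : T :=
  if k is k'.+1 then (if n is 0 then v0 else step (odd n) (odd n./2) (Vf k' n./2))
  else v0.
Definition V (n : nat) : T := Vf n n.

Lemma nsplit n : n = (2 * n./2 + odd n)%N.
Proof. by rewrite -[in LHS](odd_double_half n) -mul2n addnC. Qed.

Lemma Vf_stable k1 k2 n : (n <= k1)%N -> (n <= k2)%N -> Vf k1 n = Vf k2 n.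
Proof.
elim: k1 k2 n => [|k1 IH] [|k2] [|n] //= H1 H2.
have h : n.+1 = (2 * uphalf n + odd n.+1)%N := nsplit n.+1.
have := leq_b1 (odd n.+1) => hb.
rewrite (IH k2) //; lia.
Qed.

Lemma half_2mb m (b : bool) : ((2 * m + b)./2 = m)%N.
Proof. by rewrite addnC mul2n half_bit_double. Qed.
Lemma odd_2mb m (b : bool) : odd (2 * m + b) = b.
Proof. by rewrite oddD oddM /=; case: b. Qed.

Lemma Vpos n : (0 < n)%N -> V n = step (odd n) (odd n./2) (V n./2).
Proof.
case: n => [//|n] _; rewrite /V /=; congr step; apply: Vf_stable => //.
have h : n.+1 = (2 * uphalf n + odd n.+1)%N := nsplit n.+1.
have := leq_b1 (odd n.+1); lia.
Qed.

Lemma V2 m (b : bool) : V (2 * m + b) = step b (odd m) (V m).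
Proof.
have [E|P] := posnP (2 * m + b)%N.
  have [-> ->] : m = 0%N /\ b = false by move: E; case: b; lia.
  by [].
by rewrite Vpos // half_2mb odd_2mb.
Qed.

Definition U (n : nat) (q : bool) : int := if q then (V n).1.1.2 else (V n).1.1.1.

Lemma Vcons n : (V n).1.2 = (V n.+1).1.1.1 /\ (V n).2 = (V n.+1).1.1.2.
Proof.
elim/ltn_ind: n => n IH.
move: IH; rewrite (nsplit n); move: (n./2) (odd n) => m [] IH.
  have -> : ((2 * m + true).+1 = 2 * m.+1 + false)%N by rewrite /=; lia.
  rewrite !V2.
  have [E1 E2] := IH m ltac:(simpl; lia).
  rewrite /step /= -E1 -E2.
  by case: (odd m).
have -> : ((2 * m + false).+1 = 2 * m + true)%N by rewrite /=; lia.
rewrite !V2 /step /=.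
by case: (odd m).
Qed.

Lemma Ustep n (b c : bool) :
  U (2 * n + b) c =
  Order.max (U (n + (b && c)) false + dl b c (odd n) false)
          (U (n + (b && c)) true + dl b c (odd n) true).
Proof.
rewrite /U V2 /dl /step.
case: b; case: c => /=; rewrite ?addn1 ?addn0 -?(proj1 (Vcons n)) -?(proj2 (Vcons n));
case: (odd n) => /=; rewrite /b2z /= ?subr0 ?sub0r ?subrr ?addr0 //.
Qed.


Definition Good (n : nat) : Prop :=
  (forall j, W n j <= U n (odd j)) /\ (forall q : bool, exists j, odd j = q /\ W n j = U n q).

Lemma eps_le1 k : eps k <= 1. Proof. by rewrite /eps; case: pf. Qed.

Lemma Good_all n : Good n.
Proof.
elim/ltn_ind: n => n IH.
have [->|n1] := posnP n.
  split=> [j|q]; first by rewrite W0 /U /=; case: odd.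
  exists q; split; first by case: q.
  by rewrite W0 /U /=; case: q.
have [->|n2] := eqVneq n 1%N.
  have HV : V 1 = (1, 1, 2, 2) by [].
  split=> [j|q].
    by rewrite WS W0 add0r /U HV; case: odd; apply: eps_le1.
  case: q.
    by exists 1%N; split=> //; rewrite WS W0 add0r /U HV.
  by exists 0%N; split=> //; rewrite WS W0 add0r /U HV.
move: IH n1 n2; rewrite (nsplit n); move: (n./2) (odd n) => m b IH n1 n2.
have Hm : (0 < m)%N by move: n1 n2; have := leq_b1 b; lia.
have IHm : forall c : bool, Good (m + (b && c)).
  move=> c; apply: IH; have : ((b && c) <= b)%N by case: (b); case: (c).
  lia.
split=> [j|q].
  rewrite [in W _ j](nsplit j) Wrec Ustep.
  have [Hup _] := IHm (odd j).
  set m' := (m + (b && odd j))%N.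
  have := Hup j./2; case: (odd j./2) => H; rewrite le_max.
    by apply/orP; right; rewrite lerD2r.
  by apply/orP; left; rewrite lerD2r.
have [_ Hat] := IHm q.
rewrite Ustep.
set X := U _ false + _; set Y := U _ true + _.
have [HXY|HXY] := leP X Y.
  have [j' [Hj' Hw]] := Hat true.
  exists (2 * j' + q)%N; split; first by rewrite odd_2mb.
  by rewrite Wrec Hw Hj'.
have [j' [Hj' Hw]] := Hat false.
exists (2 * j' + q)%N; split; first by rewrite odd_2mb.
by rewrite Wrec Hw Hj'.
Qed.

Definition Mx (n : nat) : int := Order.max (U n false) (U n true).

Lemma W_le n j : W n j <= Mx n.
Proof.
have [H _] := Good_all n; rewrite /Mx le_max; have := H j.
by case: odd => Hj; apply/orP; [right|left].
Qed.

Lemma W_att n : exists j, W n j = Mx n.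
Proof.
have [_ H] := Good_all n; rewrite /Mx.
have [HXY|HXY] := leP (U n false) (U n true).
  by have [j [_ Hj]] := H true; exists j; rewrite Hj.
by have [j [_ Hj]] := H false; exists j; rewrite Hj.
Qed.

Lemma W_ge n j : - Mx n <= W n j.
Proof.
have [j' Hj'] := W_sym n j; have := W_le n j'; rewrite Hj' => H.
by rewrite lerNl.
Qed.

Lemma W_att' n : exists j, W n j = - Mx n.
Proof.
have [j Hj] := W_att n; have [j' Hj'] := W_sym n j; exists j'; by rewrite Hj' Hj.
Qed.


Definition z (j n : nat) : nat := nzeros (pf_factor j.+1 n).

Lemma pf_factorS i n : pf_factor i n.+1 = pf_factor i n ++ [:: pf (i + n)].
Proof. by rewrite /pf_factor -addn1 iotaD map_cat /= add0n. Qed.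

Lemma zS j n : z j n.+1 = (z j n + ~~ pf (j + n).+1)%N.
Proof.
by rewrite /z pf_factorS /nzeros count_cat /= addn0 addSn; case: pf.
Qed.

Lemma z_W j n : 2 * (z j n)%:Z = n%:Z + W n j.
Proof.
elim: n => [|n IH]; first by rewrite W0 /z /pf_factor /=.
rewrite zS WS /eps; case: pf => /=; lia.
Qed.

Lemma z_step j n : (z j.+1 n <= z j n + 1)%N /\ (z j n <= z j.+1 n + 1)%N.
Proof.
have H1 := z_W j n; have H2 := z_W j.+1 n.
have E : W n j.+1 = W n j + eps (j + n).+1 - eps j.+1.
  by rewrite /W addSn !DS; ring.
rewrite E in H2; move: H1 H2; rewrite /eps; case: pf; case: pf => /=; lia.
Qed.

Lemma ivt (f : nat -> nat) : (forall j, f j.+1 <= f j + 1 /\ f j <= f j.+1 + 1)%N ->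
  forall j1 j2 k, (f j1 <= k)%N -> (k <= f j2)%N -> exists j, f j = k.
Proof.
move=> Hf.
have main : forall j1 d k, ((f j1 <= k /\ k <= f (j1 + d)) \/ (f (j1 + d) <= k /\ k <= f j1))%N ->
    exists j, f j = k.
  move=> j1 d; elim: d => [|d IH] k.
    by rewrite addn0 => H; exists j1; lia.
  move=> H; have := Hf (j1 + d); rewrite addnS in H.
  move=> Hd.
  move: H Hd; set a := f j1; set b := f (j1 + d); set c := f (j1 + d).+1 => H Hd.
  have [H'|H'] : ((a <= k /\ k <= b) \/ (b <= k /\ k <= a))%N \/ k = c.
    lia.
    exact: IH.
  by exists (j1 + d).+1.
move=> j1 j2 k H1 H2.
have [le|lt] := leqP j1 j2.
  have := main j1 (j2 - j1)%N k; rewrite subnKC //; apply; left; lia.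
have := main j2 (j1 - j2)%N k; rewrite subnKC; [apply; right; lia | lia].
Qed.


Lemma card_itv N lo hi : #|[set k : 'I_N | (lo <= k <= hi)%N]| = (minn N hi.+1 - minn N lo)%N.
Proof.
rewrite -sum1_card big_mkcond /=.
have -> : (\sum_(i < N) (if i \in [set k : 'I_N | (lo <= k <= hi)%N] then 1 else 0) =
   \sum_(i < N) (fun k : nat => ((lo <= k <= hi)%N : nat)) i)%N.
  by apply: eq_bigr => i _; rewrite inE; case: (_ && _).
rewrite -(big_mkord xpredT (fun k : nat => ((lo <= k <= hi)%N : nat))).
elim: N => [|N IH]; first by rewrite big_geq //; lia.
rewrite big_nat_recr //= IH.
case: (leqP lo N) => H1; case: (leqP N hi) => H2 /=; lia.
Qed.

Lemma z_le j n : (z j n <= n)%N.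
Proof.
by rewrite /z /nzeros (leq_trans (count_size _ _)) // /pf_factor size_map size_iota.
Qed.

Lemma rho_Mx n : (rho n)%:Z = Mx n + 1.
Proof.
have [jM HM] := W_att n; have [jm Hm] := W_att' n.
have EM := z_W jM n; have Em := z_W jm n.
rewrite HM in EM; rewrite Hm in Em.
have Hb : forall j, (z jm n <= z j n <= z jM n)%N.
  move=> j; have := z_W j n; have := W_le n j; have := W_ge n j.
  move=> H1 H2 H3; apply/andP; split; lia.
rewrite /rho.
have -> : [set k : 'I_n.+1 | `[< exists i : nat, (0 < i)%N /\ nzeros (pf_factor i n) = k >]]
   = [set k : 'I_n.+1 | (z jm n <= k <= z jM n)%N].
  apply/setP => k; rewrite !inE; apply/asboolP/idP.
    move=> [[|i] [Hi Hk]] //; rewrite -Hk; exact: (Hb i).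
  move=> /andP [H1 H2].
  have [j Hj] := ivt (fun j => z_step j n) H1 H2.
  by exists j.+1; split.
rewrite card_itv.
have := z_le jM n; have := z_le jm n; have := Hb jm; move: EM Em.
move: (z jM n) (z jm n) (Mx n) => a b M; lia.
Qed.


Definition shift (k : int) (v : T) : T := (v.1.1.1 + k, v.1.1.2 + k, v.1.2 + k, v.2 + k).
Definition norm (v : T) : T := shift (- v.1.1.1) v.
Definition top (v : T) : int := Order.max v.1.1.1 v.1.1.2.

Lemma maxD (x y k : int) : Order.max (x + k) (y + k) = Order.max x y + k.
Proof.
have [H|H] := leP x y.
  by rewrite max_r // lerD2r.
by rewrite max_l // lerD2r ltW.
Qed.

Lemma shift_norm v : v = shift v.1.1.1 (norm v).
Proof.
by case: v => [[[a b] c] d]; rewrite /norm /shift /= !subrK.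
Qed.

Lemma norm_shift k v : norm (shift k v) = norm v.
Proof.
have E : forall x a k : int, x + k + - (a + k) = x + - a by move=> *; ring.
by case: v => [[[a b] c] d]; rewrite /norm /shift /= !E.
Qed.

Lemma top_shift k v : top (shift k v) = top v + k.
Proof. by rewrite /top /shift /= maxD. Qed.

Lemma step_shift b p k v : step b p (shift k v) = shift k (step b p v).
Proof.
case: v => [[[a bb] c] d]; rewrite /step /shift /=.
by case: b; case: p; rewrite /= ?(addrAC _ k) ?maxD.
Qed.

Fixpoint Phi (e c : nat) (p : bool) (v : T) : T :=
  if e is e'.+1 then step (odd c) (if e' is 0 then p else odd c./2) (Phi e' c./2 p v) else v.

Lemma Phi_shift e c p k v : Phi e c p (shift k v) = shift k (Phi e c p v).
Proof. by elim: e c => [|e IH] c //=; rewrite IH step_shift. Qed.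

Lemma V_Phi e c n : (c < 2 ^ e)%N -> V (2 ^ e * n + c) = Phi e c (odd n) (V n).
Proof.
elim: e c => [|e IH] c Hc.
  by move: Hc; rewrite expn0 ltnS leqn0 => /eqP ->; rewrite mul1n addn0.
have Hc2 : (c./2 < 2 ^ e)%N.
  move: Hc; rewrite expnS; have := nsplit c; have := leq_b1 (odd c); lia.
have -> : (2 ^ e.+1 * n + c = 2 * (2 ^ e * n + c./2) + odd c)%N.
  rewrite expnS -mulnA; have := nsplit c; lia.
rewrite V2 IH //=; congr step.
case: e {IH} Hc Hc2 => [|e] Hc Hc2.
  by move: Hc2; rewrite expn0 ltnS leqn0 => /eqP ->; rewrite mul1n addn0.
by rewrite oddD expnS -mulnA oddM.
Qed.

Definition Slist : seq (bool * T) :=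
 [:: (false, (0, -2, -1, -1)); (false, (0, 0, -1, -1)); (false, (0, 0, -1, 1));
     (false, (0, 0, 1, -1)); (false, (0, 0, 1, 1)); (false, (0, 2, 1, 1));
     (true, (0, -2, -1, -1)); (true, (0, 0, -1, -1)); (true, (0, 0, -1, 1));
     (true, (0, 0, 1, -1)); (true, (0, 0, 1, 1)); (true, (0, 2, 1, 1))].

Lemma Sclosed : all (fun s => all (fun b => (b, norm (step b s.1 s.2)) \in Slist) [:: true; false]) Slist.
Proof. by vm_compute. Qed.


Lemma inv n : (odd n, norm (V n)) \in Slist.
Proof.
elim/ltn_ind: n => n IH.
have [->|n1] := posnP n; first by vm_compute.
rewrite (nsplit n) V2 odd_2mb (shift_norm (V n./2)) step_shift norm_shift.
have Hm : (n./2 < n)%N by have := nsplit n; have := leq_b1 (odd n); lia.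
have /allP H := allP Sclosed _ (IH _ Hm).
by apply: (H (odd n)); case: (odd n).
Qed.

Lemma Mx_top n : Mx n = top (V n). Proof. by []. Qed.

Definition chk (e c e' c' : nat) (k : int) : bool :=
  [&& (c < 2 ^ e)%N, (c' < 2 ^ e')%N &
      all (fun s => top (Phi e c s.1 s.2) == top (Phi e' c' s.1 s.2) + k) Slist].

Lemma chkP e c e' c' k : chk e c e' c' k ->
  forall n, Mx (2 ^ e * n + c) = Mx (2 ^ e' * n + c') + k.
Proof.
case/and3P => H1 H2 H3 n.
rewrite !Mx_top !V_Phi // (shift_norm (V n)) (Phi_shift e c) (Phi_shift e' c') !top_shift.
have E : top (Phi e c (odd n) (norm (V n))) = top (Phi e' c' (odd n) (norm (V n))) + k
  := eqP (allP H3 _ (inv n)).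
rewrite E.
by rewrite addrAC.
Qed.

Definition base : seq (nat * nat) :=
  [:: (0, 0); (1, 0); (1, 1); (2, 1); (2, 3); (3, 3); (3, 5); (3, 7)]%N.

Definition cands : seq (nat * nat * int) :=
  [seq (t.1, t.2, k) | t <- base, k <- [:: 0; 1; 2]].

Lemma small_all :
  all (fun e => all (fun c =>
     has (fun x => ((x.1.1, x.1.2) \in base) && chk e c x.1.1 x.1.2 x.2) cands) (iota 0 (2 ^ e))) (iota 0 4).
Proof. by vm_compute. Qed.

Definition cands16 : seq (nat * nat * int) :=
  [seq (x.1, x.2, k) | x <- [seq (a, d) | a <- iota 0 4, d <- iota 0 (2 ^ a)], k <- [:: 0; 1; 2]].

Lemma r16_all :
  all (fun r => has (fun x => (x.1.1 <= 3)%N && chk 4 r x.1.1 x.1.2 x.2) cands16) (iota 0 16).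
Proof. by vm_compute. Qed.


Lemma red e : forall c, (c < 2 ^ e)%N -> exists t, t \in base /\
   exists k : int, forall n, Mx (2 ^ e * n + c) = Mx (2 ^ t.1 * n + t.2) + k.
Proof.
elim/ltn_ind: e => e IH c Hc.
case: (leqP e 3) => He.
  have He' : e \in iota 0 4 by rewrite mem_iota; lia.
  have /allP Hs := allP small_all e He'.
  have Hc' : c \in iota 0 (2 ^ e) by rewrite mem_iota; lia.
  have /hasP [x _ /andP [Hb Hchk]] := Hs c Hc'.
  exists (x.1.1, x.1.2); split=> //; exists x.2; exact: chkP.
have Hr : (c %% 16 < 16)%N by rewrite ltn_mod.
have Hr' : (c %% 16)%N \in iota 0 16 by rewrite mem_iota; lia.
have /hasP [x _ /andP [Ha Hchk]] := allP r16_all (c %% 16)%N Hr'.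
have Hd : (x.1.2 < 2 ^ x.1.1)%N by case/and3P: Hchk.
have Hrel := chkP Hchk.
set a := x.1.1 in Ha Hd Hrel; set d := x.1.2 in Hd Hrel; set k := x.2 in Hrel.
set e4 := (e - 4)%N.
have HE : (2 ^ e = 2 ^ 4 * 2 ^ e4)%N by rewrite -expnD /e4 subnKC //; lia.
have Hq : (c %/ 16 < 2 ^ e4)%N by rewrite ltn_divLR // mulnC -HE.
have Hc2 : (2 ^ a * (c %/ 16) + d < 2 ^ (a + e4))%N.
  rewrite expnD; move: (2 ^ a)%N (2 ^ e4)%N Hd Hq => P Q Hd Hq; nia.
have Ha4 : (a + e4 < e)%N by rewrite /e4; lia.
have [t [Ht [k' Hk']]] := IH _ Ha4 _ Hc2.
exists t; split=> //; exists (k + k') => n.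
have -> : (2 ^ e * n + c = 2 ^ 4 * (2 ^ e4 * n + c %/ 16) + c %% 16)%N.
  by rewrite HE (divn_eq c 16) mulnDr mulnA modnMDl mulnC -divn_eq; lia.
rewrite Hrel.
have -> : (2 ^ a * (2 ^ e4 * n + c %/ 16) + d = 2 ^ (a + e4) * n + (2 ^ a * (c %/ 16) + d))%N.
  by rewrite expnD mulnDr mulnA addnA.
by rewrite Hk' addrAC addrA.
Qed.


Definition gen (i : 'I_9) : nat -> int := fun n =>
  if (i < 8)%N then (rho (2 ^ (nth (0, 0) base i).1 * n + (nth (0, 0) base i).2)%N)%:Z
  else 1.

Definition Comb (h : nat -> int) : Prop :=
  exists c : 'I_9 -> int, forall n, h n = \sum_(i < 9) c i * gen i n.

Lemma Comb_delta (j : 'I_9) : Comb (gen j).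
Proof.
exists (fun i => if i == j then 1 else 0) => n.
rewrite (bigD1 j) //= eqxx mul1r big1 ?addr0 // => i /negbTE ->; by rewrite mul0r.
Qed.

Lemma Comb_ext h h' : (forall n, h n = h' n) -> Comb h' -> Comb h.
Proof. by move=> E [c Hc]; exists c => n; rewrite E Hc. Qed.

Lemma Comb_add h1 h2 : Comb h1 -> Comb h2 -> Comb (fun n => h1 n + h2 n).
Proof.
move=> [c1 H1] [c2 H2]; exists (fun i => c1 i + c2 i) => n.
by rewrite H1 H2 -big_split /=; apply: eq_bigr => i _; rewrite mulrDl.
Qed.

Lemma Comb_scale a h : Comb h -> Comb (fun n => a * h n).
Proof.
move=> [c H]; exists (fun i => a * c i) => n.
by rewrite H mulr_sumr; apply: eq_bigr => i _; rewrite mulrA.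
Qed.

Lemma Comb_zero : Comb (fun _ => 0).
Proof. by exists (fun _ => 0) => n; rewrite big1 // => i _; rewrite mul0r. Qed.

Lemma Comb_sum r (g : 'I_r -> nat -> int) (c : 'I_r -> int) :
  (forall i, Comb (g i)) -> Comb (fun n => \sum_(i < r) c i * g i n).
Proof.
elim: r g c => [|r IH] g c Hg.
  by apply: Comb_ext Comb_zero => n; rewrite big_ord0.
apply: (Comb_ext (h' := fun n => \sum_(i < r) c (widen_ord (leqnSn r) i) * g (widen_ord (leqnSn r) i) n
                        + c ord_max * g ord_max n)).
  by move=> n; rewrite big_ord_recr.
apply: Comb_add; first by apply: IH.
exact: Comb_scale.
Qed.

Lemma base_ok : all (fun t => (t.2 < 2 ^ t.1)%N) base. Proof. by []. Qed.

Lemma Comb_kernel e c : (c < 2 ^ e)%N -> Comb (fun n => (rho (2 ^ e * n + c)%N)%:Z).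
Proof.
move=> Hc; have [t [Ht [k Hk]]] := red Hc.
have H8 : (index t base < 8)%N by rewrite -[8%N]/(size base) index_mem.
have Hi : (index t base < 9)%N by apply: ltn_trans H8 _.
pose j : 'I_9 := Ordinal Hi.
pose m : 'I_9 := ord_max.
have Hj8 : (j < 8)%N := H8.
apply: (Comb_ext (h' := fun n => gen j n + k * gen m n)).
  move=> n; rewrite !rho_Mx Hk /gen Hj8 /= rho_Mx nth_index //; ring.
apply: Comb_add; first exact: Comb_delta.
apply: Comb_scale; exact: Comb_delta.
Qed.

Local Close Scope ring_scope.

Theorem theorem1 : k_regular 2 (fun n => Posz (rho n)).
Proof.
rewrite /k_regular /zfin_gen.
exists 9%N, gen; split.
  move=> i; exists 1%N, (fun _ => gen i), (fun _ => 1); split.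
    move=> _; case: (ltnP i 8) => Hi.
      left; exists (nth (0, 0) base i).1, (nth (0, 0) base i).2; split.
        by apply: (allP base_ok); apply: mem_nth.
      by apply: funext => n; rewrite /gen Hi.
    by right; apply: funext => n; rewrite /gen ltnNge Hi.
  by move=> n; rewrite big_ord1 mul1r.
move=> h [r [g [c [Hg Hh]]]].
have : Comb h.
  apply: (Comb_ext Hh); apply: Comb_sum => i.
  case: (Hg i) => [[e [c' [Hc' ->]]]|->].
    exact: Comb_kernel.
  have := Comb_delta ord_max; apply: Comb_ext => n; by [].
by [].
Qed.
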